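(* For any $m \in \mathbb{N}$ and any $\vec x = (x_m,\dots,x_1) \in \mathbb{Z}_2^m$, let $I(\vec x) = \sum_{i=1}^m x_i 2^{i-1}$ denote its corresponding integer. Let $V \subseteq \mathbb{Z}_2^n$ be a vector subspace of dimension $k$, linearly ordered via $I$ (i.e. $\vec v < \vec v'$ iff $I(\vec v) < I(\vec v')$), and enumerate its elements in increasing order as $V = \{\vec v_0, \vec v_1, \dots, \vec v_{2^k-1}\}$. Then the map $T: \mathbb{Z}_2^k \to V$ given by $T(\vec x) = \vec v_{I(\vec x)}$ is a linear isomorphism (of $\mathbb{Z}_2$-vector spaces).
   Context: Vectors in $\mathbb{Z}_2^m$ are written with their first-listed coordinate as the most significant bit, so $I$ is the usual binary-to-integer map. *)

(* Defs.v *)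
From HB Require Import structures.
From mathcomp Require Import all_boot all_order all_algebra.
Set Implicit Arguments. Unset Strict Implicit. Unset Printing Implicit Defensive.
Import GRing.Theory.
Local Open Scope ring_scope.

Definition bitval (b : 'F_2) : nat := nat_of_bool (b != 0%R).

(* I(x) for x = (x_m, ..., x_1) stored as a row vector whose index 0 is the
   first-listed (most significant) coordinate x_m; index j holds x_{m-j}. *)
Definition Ival (m : nat) (x : 'rV['F_2]_m) : nat :=
  (\sum_(j < m) bitval (x ord0 j) * 2 ^ (m - 1 - j))%N.

Definition Venum (n : nat) (V : {vspace 'rV['F_2]_n}) : seq 'rV['F_2]_n :=
  sort (fun u v => Ival u <= Ival v)%N [seq v <- enum 'rV['F_2]_n | v \in V].

Definition Vth (n : nat) (V : {vspace 'rV['F_2]_n}) (i : nat) : 'rV['F_2]_n :=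
  nth 0 (Venum V) i.

(* Main.v *)
Require Import Defs.
From HB Require Import structures.
From mathcomp Require Import all_boot all_order all_algebra all_field.
From mathcomp Require Import zify.
Set Implicit Arguments. Unset Strict Implicit. Unset Printing Implicit Defensive.
Import GRing.Theory.
Local Open Scope ring_scope.

Lemma F2_cases (x : 'F_2) : x = 0 \/ x = 1.
Proof. case: x => [[|[|//]]] H; [left|right]; exact: val_inj. Qed.

Lemma bitval_le (b : 'F_2) : (bitval b <= 1)%N.
Proof. by rewrite /bitval; case: (b != 0). Qed.

Lemma sum_bound (F : nat -> nat) m d :
  (forall j, F j <= 2 ^ (m - 1 - j))%N ->
  (\sum_(m - d <= j < m) F j < 2 ^ d)%N.
Proof.
move=> HF; elim: d => [|d IH].
  by rewrite subn0 big_geq.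
case: (leqP m d) => Hmd.
  have -> : (m - d.+1 = m - d)%N by lia.
  apply: (leq_trans IH); rewrite leq_exp2l //.
rewrite big_ltn; last by lia.
have -> : ((m - d.+1).+1 = m - d)%N by lia.
rewrite expnS mul2n -addnn.
apply: leq_ltn_trans (leq_add (HF _) (leqnn _)) _.
have -> : (m - 1 - (m - d.+1) = d)%N by lia.
by rewrite ltn_add2l.
Qed.

Definition gI m (x : 'rV['F_2]_m) (j : nat) : nat :=
  oapp (fun i : 'I_m => bitval (x ord0 i) * 2 ^ (m - 1 - i))%N 0%N (insub j).

Lemma IvalE m (x : 'rV['F_2]_m) : Ival x = (\sum_(0 <= j < m) gI x j)%N.
Proof. by rewrite big_mkord /Ival; apply: eq_bigr => i _; rewrite /gI valK. Qed.

Lemma gI_le m (x : 'rV['F_2]_m) j : (gI x j <= 2 ^ (m - 1 - j))%N.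
Proof.
rewrite /gI; case: insubP => //= i _ <-.
by rewrite -[X in (_ <= X)%N]mul1n leq_mul2r bitval_le orbT.
Qed.

Lemma Ival_bound m (x : 'rV['F_2]_m) : (Ival x < 2 ^ m)%N.
Proof.
rewrite IvalE; have := @sum_bound (gI x) m m (gI_le x).
by rewrite subnn.
Qed.


Lemma Ival_lt m (a b : 'rV['F_2]_m) (p : 'I_m) :
  (forall j : 'I_m, (j < p)%N -> a ord0 j = b ord0 j) ->
  a ord0 p = 0 -> b ord0 p = 1 -> (Ival a < Ival b)%N.
Proof.
move=> Heq Ha Hb; rewrite !IvalE.
have Hp := ltn_ord p.
rewrite !(big_cat_nat (leq0n p) (ltnW Hp)) !(big_ltn Hp).
rewrite /=.
have -> : (\sum_(0 <= j < p) gI a j = \sum_(0 <= j < p) gI b j)%N.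
  apply: eq_big_nat => j /andP[_ Hj]; rewrite /gI.
  have Hjm : (j < m)%N by apply: ltn_trans Hp.
  by rewrite -[j]/(nat_of_ord (Ordinal Hjm)) valK /= Heq.
rewrite ltn_add2l.
have -> : gI a p = 0%N by rewrite /gI valK /= Ha.
have -> : gI b p = (2 ^ (m - 1 - p))%N by rewrite /gI valK /= Hb /bitval mul1n.
rewrite add0n.
apply: leq_trans (leq_addr _ _).
have := @sum_bound (gI a) m (m - 1 - p) (gI_le a).
by have -> : (m - (m - 1 - p) = p.+1)%N by lia.
Qed.

Lemma Ival_cmp m (a b : 'rV['F_2]_m) (p : 'I_m) :
  (forall j : 'I_m, (j < p)%N -> a ord0 j = b ord0 j) ->
  a ord0 p != b ord0 p -> (Ival a <= Ival b)%N = (a ord0 p == 0).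
Proof.
move=> Heq Hne.
case: (F2_cases (a ord0 p)) => Ha; case: (F2_cases (b ord0 p)) => Hb;
  rewrite Ha Hb in Hne *; rewrite ?eqxx // in Hne *.
- by rewrite ltnW // (Ival_lt Heq Ha Hb).
- rewrite leqNgt (Ival_lt _ Hb Ha) // => j Hj; by rewrite Heq.
Qed.

Lemma first_diff m (a b : 'rV['F_2]_m) : a != b ->
  exists p : 'I_m, (forall j : 'I_m, (j < p)%N -> a ord0 j = b ord0 j) /\ a ord0 p != b ord0 p.
Proof.
move=> Hab.
have [j0 Hj0] : exists j0, a ord0 j0 != b ord0 j0.
  apply/existsP; apply: contraR Hab => /existsPn H; apply/eqP/rowP => j.
  by move: (H j); rewrite negbK => /eqP.
case: (@arg_minnP _ j0 (fun j => a ord0 j != b ord0 j) (fun j : 'I_m => nat_of_ord j) Hj0) => p Hp Hmin.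
exists p; split => // j Hj; apply/eqP; apply: contraTT Hj => Hj.
by rewrite -leqNgt Hmin.
Qed.

Lemma Ival_inj m : injective (@Ival m).
Proof.
move=> a b HI; apply/eqP; apply: contraT => Hab.
have [p [Heq Hne]] := first_diff Hab.
have H1 := Ival_cmp Heq Hne.
have Heq' : forall j : 'I_m, (j < p)%N -> b ord0 j = a ord0 j by move=> j /Heq ->.
have H2 := Ival_cmp Heq' (contra_neq (fun e => esym e) Hne).
move: H1 H2; rewrite HI leqnn => /esym/eqP Ha /esym/eqP Hb.
by move: Hne; rewrite Ha Hb eqxx.
Qed.

Definition leI m := fun u v : 'rV['F_2]_m => (Ival u <= Ival v)%N.

Lemma card_rows m : #|{: 'rV['F_2]_m}| = (2 ^ m)%N.
Proof. by rewrite card_mx card_Fp // mul1n. Qed.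

Lemma nth_sorted_rows m (s : seq 'rV['F_2]_m) :
  sorted (@leI m) s -> perm_eq s (enum 'rV['F_2]_m) ->
  forall x, nth 0 s (Ival x) = x.
Proof.
move=> Hs Hp x.
have Hsz : size s = (2 ^ m)%N by rewrite (perm_size Hp) -cardE card_rows.
have Hu : uniq (map (@Ival m) s).
  by rewrite (map_inj_uniq (@Ival_inj m)) (perm_uniq Hp) enum_uniq.
have Hsub : {subset map (@Ival m) s <= iota 0 (2 ^ m)}.
  by move=> i /mapP[y _ ->]; rewrite mem_iota add0n Ival_bound.
have Hle : (size (iota 0 (2 ^ m)) <= size (map (@Ival m) s))%N.
  by rewrite size_iota size_map Hsz.
have [Hsz2 Hmem] := uniq_min_size Hu Hsub Hle.
have Hmap : map (@Ival m) s = iota 0 (2 ^ m).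
  apply: (sorted_eq leq_trans anti_leq).
  - by rewrite sorted_map.
  - exact: iota_sorted.
  by apply: uniq_perm => //; exact: iota_uniq.
have Hx : (Ival x < size s)%N by rewrite Hsz Ival_bound.
apply: Ival_inj.
rewrite -(nth_map 0 0%N _ Hx) Hmap nth_iota ?add0n //.
by rewrite -Hsz.
Qed.

Lemma ev_mono n (A : {set 'I_n}) (i j : 'I_#|A|) :
  (i < j)%N -> (enum_val i < enum_val j)%N.
Proof.
move=> Hij.
have Htr : transitive (relpre (@nat_of_ord n) ltn).
  by move=> a b c; apply: ltn_trans.
have Hs : sorted (relpre (@nat_of_ord n) ltn) (enum A).
  rewrite /enum_mem -enumT; apply: sorted_filter => //.
  by rewrite -sorted_map val_enum_ord iota_ltn_sorted.
have Hsz : size (enum A) = #|A| by rewrite cardE.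
have [x0 _] : 'I_n * unit := (enum_val i, tt).
rewrite [enum_val i](enum_val_nth x0) [enum_val j](enum_val_nth x0).
apply: (sorted_ltn_nth Htr x0 Hs) => //; by rewrite inE Hsz ltn_ord.
Qed.

Lemma ev_mono' n (A : {set 'I_n}) (i j : 'I_#|A|) :
  (enum_val i < enum_val j)%N -> (i < j)%N.
Proof.
move=> H; case: (ltngtP i j) => // [Hji|Hij].
  by have := ev_mono Hji; rewrite ltnNge (ltnW H).
by move: H; rewrite (val_inj Hij) ltnn.
Qed.

Definition isLead n (v : 'rV['F_2]_n) (p : 'I_n) :=
  (v ord0 p != 0) && [forall j : 'I_n, (j < p)%N ==> (v ord0 j == 0)].
Definition Piv n (V : {vspace 'rV['F_2]_n}) : {set 'I_n} :=
  [set p | [exists v, (v \in V) && isLead v p]].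
Definition Sm n (V : {vspace 'rV['F_2]_n}) (v : 'rV['F_2]_n) : 'rV['F_2]_#|Piv V| :=
  \row_i v ord0 (enum_val i).

Lemma diff_piv n (V : {vspace 'rV['F_2]_n}) (u w : 'rV['F_2]_n) (p : 'I_n) :
  u \in V -> w \in V ->
  (forall j : 'I_n, (j < p)%N -> u ord0 j = w ord0 j) -> u ord0 p != w ord0 p ->
  p \in Piv V.
Proof.
move=> Hu Hw Heq Hne; rewrite inE; apply/existsP; exists (u - w).
rewrite memvB //= /isLead !mxE subr_eq0 Hne /=.
by apply/forallP => j; apply/implyP => /Heq; rewrite !mxE => ->; rewrite subrr.
Qed.

Lemma Sm_inj n (V : {vspace 'rV['F_2]_n}) : {in V &, injective (Sm V)}.
Proof.
move=> u w Hu Hw HS; apply/eqP; apply: contraT => Hne.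
have [p [Heq Hpne]] := first_diff Hne.
have Hp := diff_piv Hu Hw Heq Hpne.
have := congr1 (fun r : 'rV_#|Piv V| => r ord0 (@enum_rank_in _ p (Piv V) Hp p)) HS.
by rewrite !mxE enum_rankK_in // => /eqP; rewrite (negbTE Hpne).
Qed.

Lemma Sm_mono n (V : {vspace 'rV['F_2]_n}) : {in V &, forall u w,
  leI (Sm V u) (Sm V w) = leI u w}.
Proof.
move=> u w Hu Hw; case: (eqVneq u w) => [->|Hne]; first by rewrite /leI !leqnn.
have [p [Heq Hpne]] := first_diff Hne.
have Hp := diff_piv Hu Hw Heq Hpne.
rewrite /leI (Ival_cmp Heq Hpne) (@Ival_cmp _ _ _ (@enum_rank_in _ p (Piv V) Hp p)).
- by rewrite mxE enum_rankK_in.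
- move=> i Hi; rewrite !mxE Heq //.
  by have := ev_mono Hi; rewrite enum_rankK_in.
- by rewrite !mxE enum_rankK_in.
Qed.

Lemma Sm_lin n (V : {vspace 'rV['F_2]_n}) a u w :
  Sm V (a *: u + w) = a *: Sm V u + Sm V w.
Proof. by apply/rowP => i; rewrite !mxE. Qed.

Lemma addrowE n (v w : 'rV['F_2]_n) k : (v + w) ord0 k = v ord0 k + w ord0 k.
Proof. by rewrite mxE. Qed.

Lemma Sm_surj n (V : {vspace 'rV['F_2]_n}) (y : 'rV['F_2]_#|Piv V|) :
  exists2 v, v \in V & Sm V v = y.
Proof.
suff H : forall j, (j <= n)%N -> exists2 v, v \in V &
    forall i : 'I_#|Piv V|, (enum_val i < j)%N -> v ord0 (enum_val i) = y ord0 i.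
  have [v Hv Hy] := H n (leqnn n); exists v => //.
  by apply/rowP => i; rewrite mxE Hy.
elim=> [_|j IH Hj]; first by exists 0; rewrite ?mem0v.
have [v Hv Hy] := IH (ltnW Hj).
pose pj : 'I_n := Ordinal Hj.
case: (boolP (pj \in Piv V)) => Hpj; last first.
  exists v => // i; rewrite ltnS leq_eqVlt => /orP[/eqP Hi|]; last exact: Hy.
  have E : pj = enum_val i by apply: val_inj; rewrite /= Hi.
  by move: Hpj; rewrite E (enum_valP i).
move: (Hpj); rewrite inE => /existsP[w /andP[Hw /andP[Hwp /forallP Hwz]]].
pose i0 := @enum_rank_in _ pj (Piv V) Hpj pj.
have Hi0 : enum_val i0 = pj by rewrite enum_rankK_in.
have Eq : forall i : 'I_#|Piv V|, nat_of_ord (enum_val i) = j -> i = i0.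
  move=> i Hi; apply: enum_val_inj; rewrite Hi0; exact: val_inj.
case: (eqVneq (v ord0 pj) (y ord0 i0)) => Hvp.
  exists v => // i; rewrite ltnS leq_eqVlt => /orP[/eqP Hi|]; last exact: Hy.
  by rewrite (Eq i Hi) Hi0.
exists (v + w); first exact: memvD.
move=> i; rewrite ltnS leq_eqVlt => /orP[/eqP Hi|Hi].
  rewrite (Eq i Hi) Hi0 addrowE.
  move: Hvp Hwp; case: (F2_cases (v ord0 pj)) => ->; case: (F2_cases (w ord0 pj)) => ->;
    case: (F2_cases (y ord0 i0)) => -> // *; exact/eqP.
rewrite addrowE Hy //.
have := implyP (Hwz (enum_val i)) Hi => /eqP ->.
by rewrite addr0.
Qed.

Lemma core n k (V : {vspace 'rV['F_2]_n}) (S : 'rV['F_2]_n -> 'rV['F_2]_k) :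
  (forall a u w, S (a *: u + w) = a *: S u + S w) ->
  {in V &, injective S} ->
  (forall y, exists2 v, v \in V & S v = y) ->
  {in V &, forall u w, leI (S u) (S w) = leI u w} ->
  let T := fun x : 'rV['F_2]_k => Vth V (Ival x) in
  linear T /\ injective T /\ (forall v : 'rV['F_2]_n, v \in V <-> exists x, T x = v).
Proof.
move=> Slin Sinj Ssurj Smono T.
have memV : forall v, (v \in Venum V) = (v \in V).
  by move=> v; rewrite /Venum mem_sort mem_filter mem_enum andbT.
have Hall : all (fun v => v \in V) (Venum V) by apply/allP => v; rewrite memV.
have Hsorted : sorted (@leI k) (map S (Venum V)).
  apply: (@homo_sorted_in _ _ (fun v => v \in V) S (@leI n) (@leI k) (Venum V)) => //.
    by move=> u w Hu Hw; rewrite Smono.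
  rewrite /Venum; apply: sort_sorted => u w; exact: leq_total.
have Hperm : perm_eq (map S (Venum V)) (enum 'rV['F_2]_k).
  apply: uniq_perm.
  - rewrite map_inj_in_uniq; first by rewrite sort_uniq filter_uniq // enum_uniq.
    by move=> u w; rewrite !memV; apply: Sinj.
  - exact: enum_uniq.
  - move=> y; rewrite mem_enum; have [v Hv <-] := Ssurj y.
    by apply: map_f; rewrite memV.
have Hsz : size (Venum V) = (2 ^ k)%N.
  by rewrite -(size_map S) (perm_size Hperm) -cardE card_rows.
have KT : forall x, T x \in V /\ S (T x) = x.
  move=> x; have Hx : (Ival x < size (Venum V))%N by rewrite Hsz Ival_bound.
  split; first by rewrite -memV /T /Vth mem_nth.
  by rewrite /T /Vth -(nth_map 0 0 _ Hx) (nth_sorted_rows Hsorted Hperm).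
split.
  move=> a x y; have [H1 H2] := KT (a *: x + y).
  have [H3 H4] := KT x; have [H5 H6] := KT y.
  apply: Sinj => //; first by rewrite memvD // memvZ.
  by rewrite H2 Slin H4 H6.
split.
  by move=> x y E; rewrite -(proj2 (KT x)) -(proj2 (KT y)) E.
move=> v; split=> [Hv|[x <-]]; last exact: (proj1 (KT x)).
exists (S v); have [H1 H2] := KT (S v).
by apply: Sinj.
Qed.

Lemma card_piv n (V : {vspace 'rV['F_2]_n}) : #|Piv V| = \dim V.
Proof.
apply: (@expnI 2) => //.
have E1 : #|V| = (2 ^ \dim V)%N by rewrite card_vspace card_Fp.
rewrite -card_rows -E1.
rewrite -cardsT -(card_in_imset (@Sm_inj n V)).
apply: eq_card => y; rewrite inE; apply/esym/imsetP.
by have [v Hv <-] := Sm_surj y; exists v.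
Qed.

Theorem lemma1 (n k : nat) (V : {vspace 'rV['F_2]_n}) (hk : \dim V = k) :
  let T := fun x : 'rV['F_2]_k => Vth V (Ival x) in
  linear T /\ injective T /\ (forall v : 'rV['F_2]_n, v \in V <-> exists x, T x = v).
Proof.
have : forall k', k' = #|Piv V| -> exists S : 'rV['F_2]_n -> 'rV['F_2]_k',
  [/\ (forall a u w, S (a *: u + w) = a *: S u + S w),
      {in V &, injective S},
      (forall y, exists2 v, v \in V & S v = y) &
      {in V &, forall u w, leI (S u) (S w) = leI u w}].
  move=> k' ->; exists (Sm V); split.
  - exact: Sm_lin.
  - exact: Sm_inj.
  - exact: Sm_surj.
  - exact: Sm_mono.
move=> /(_ k); rewrite card_piv hk => /(_ erefl) [S [H1 H2 H3 H4]].
exact: core.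
Qed.
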